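(* Let $A=F/I$ where $I\subset F$ is a two-sided ideal generated by finitely many monomials, and let $M\subset\bigoplus_{i=1}^rA[-\delta_i]$ be a finitely generated monomial right submodule. Then $N=\bigoplus_iA[-\delta_i]/M$ has a minimal graded free right resolution in which every right syzygy module $M_i$ ($i\ge1$, with $M_1=M$) is finitely generated and monomial. Moreover, if $b_k(I)=0$ for all $k>d$ and $b_k(M)=0$ for all $k>\Delta$, then $b_k(M_i)=0$ for all $k>\Delta+(i-1)(d-1)$ and all $i\ge1$. (Such a resolution need not have finite length.)
   Context: $\mathbb K$ is a field, $F=\mathbb K\langle x_1,\dots,x_n\rangle$ the free associative algebra with standard grading and $W$ its set of monomials. $A[-\delta]_e=A_{e-\delta}$; $\bigoplus_iA[-\delta_i]$ is the graded free right $A$-module with basis $e_i$ of degree $\delta_i$. A right submodule of a graded free module $\bigoplus_jA[-\Delta_j]$ (basis $\epsilon_j$) is monomial if it is generated by elements of the form $\epsilon_j(w+I)$ with $w\in W$. A graded free right resolution of $N$ is an exact sequence $0\leftarrow N\leftarrow\bigoplus_iA[-\delta_i]\leftarrow\bigoplus_jA[-\delta'_j]\leftarrow\cdots$ of graded right module homomorphisms; $M_i$ is the kernel of the $(i+1)$-th map (so $M_0=N$, $M_1=M$), and the resolution is minimal if the images of the canonical bases are minimal homogeneous bases of the $M_i$. $b_k(\cdot)$ denotes the number of degree-$k$ elements in a minimal homogeneous basis (for $I$, as a two-sided ideal of $F$). *)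

(* Defs.v *)
From HB Require Import structures.
From mathcomp Require Import all_boot all_order all_algebra.
Set Implicit Arguments. Unset Strict Implicit. Unset Printing Implicit Defensive.
Import GRing.Theory Num.Theory.
Local Open Scope ring_scope.

Section FreeAlgebra.
Variables (K : fieldType) (n : nat).

(** Monomials W of F = K<x_1..x_n>: words over 'I_n; degree = length. *)
Definition word := seq 'I_n.
(** Elements of F are the finitely supported functions word -> K
   (a general function is a noncommutative formal series). *)
Definition ser := word -> K.
Definition ser0 : ser := fun _ => 0.
Definition seradd (f g : ser) : ser := fun w => f w + g w.
Definition seropp (f : ser) : ser := fun w => - f w.
Definition sersub (f g : ser) : ser := seradd f (seropp g).
Definition sermul (f g : ser) : ser :=
  fun w => \sum_(i < (size w).+1) f (take i w) * g (drop i w).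
Definition mono (u : word) : ser := fun w => (w == u)%:R.
Definition fin_supp (f : ser) : Prop :=
  exists s : seq word, forall w, f w != 0 -> w \in s.
Definition homog (f : ser) (e : nat) : Prop :=
  forall w, f w != 0 -> size w = e.

Inductive ideal_gen (S : ser -> Prop) : ser -> Prop :=
| ig_gen f : S f -> ideal_gen S f
| ig_zero : ideal_gen S ser0
| ig_add f g : ideal_gen S f -> ideal_gen S g -> ideal_gen S (seradd f g)
| ig_lmul a f : fin_supp a -> ideal_gen S f -> ideal_gen S (sermul a f)
| ig_rmul f a : fin_supp a -> ideal_gen S f -> ideal_gen S (sermul f a).

Definition monideal (G : seq word) : ser -> Prop :=
  ideal_gen (fun f => exists2 g, g \in G & f = mono g).

Definition min_hom_basis_ideal (X B : ser -> Prop) : Prop :=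
  [/\ forall b, B b -> exists e, homog b e,
      forall f, X f <-> ideal_gen B f &
      forall b, B b -> ~ (forall f, X f -> ideal_gen (fun y => B y /\ y <> b) f)].

(** b_k(X) = 0 for all k > d. *)
Definition bk_vanish_ideal (X : ser -> Prop) (d : nat) : Prop :=
  forall B, min_hom_basis_ideal X B ->
  forall b, B b -> b <> ser0 -> forall e, homog b e -> (e <= d)%N.

(** Graded free right A-module (+)_{j<m} A[-dg_j], A = F/I: elements are
   represented by vectors of elements of F, identified modulo I. *)
Definition vec (m : nat) := 'I_m -> ser.
Definition vzero m : vec m := fun _ => ser0.
Definition vadd m (x y : vec m) : vec m := fun j => seradd (x j) (y j).
Definition vmulr m (x : vec m) (a : ser) : vec m := fun j => sermul (x j) a.
Definition vmono m (j : 'I_m) (w : word) : vec m :=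
  fun j' => if j' == j then mono w else ser0.

Inductive rspan (I : ser -> Prop) (m : nat) (S : vec m -> Prop) : vec m -> Prop :=
| rs_gen x : S x -> rspan I S x
| rs_zero : rspan I S (@vzero m)
| rs_add x y : rspan I S x -> rspan I S y -> rspan I S (vadd x y)
| rs_mul x a : fin_supp a -> rspan I S x -> rspan I S (vmulr x a)
| rs_eq x y : rspan I S x -> (forall j, I (sersub (y j) (x j))) -> rspan I S y.

Definition vhomog m (dg : 'I_m -> int) (x : vec m) (e : int) : Prop :=
  forall j w, x j w != 0 -> (size w)%:Z + dg j = e.

Definition is_monomial (I : ser -> Prop) m (X : vec m -> Prop) : Prop :=
  exists S : 'I_m -> word -> Prop,
    forall x, X x <-> rspan I (fun y => exists j w, S j w /\ y = vmono j w) x.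

Definition fin_gen (I : ser -> Prop) m (X : vec m -> Prop) : Prop :=
  exists k (g : 'I_k -> vec m),
    forall x, X x <-> rspan I (fun y => exists i, y = g i) x.

Definition min_hom_basis (I : ser -> Prop) m (dg : 'I_m -> int)
    (X B : vec m -> Prop) : Prop :=
  [/\ forall b, B b -> exists e, vhomog dg b e,
      forall x, X x <-> rspan I B x &
      forall b, B b -> ~ (forall x, X x -> rspan I (fun y => B y /\ y <> b) x)].

(** b_k(X) = 0 for all k > D. *)
Definition bk_vanish (I : ser -> Prop) m (dg : 'I_m -> int)
    (X : vec m -> Prop) (D : int) : Prop :=
  forall B, min_hom_basis I dg X B ->
  forall b, B b -> b <> @vzero m -> forall e, vhomog dg b e -> e <= D.

(** The family fam (images of the canonical basis e_i of degree dgk i)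
   is a minimal homogeneous basis of X. *)
Definition fam_min_basis (I : ser -> Prop) m (dg : 'I_m -> int)
    (X : vec m -> Prop) k (fam : 'I_k -> vec m) (dgk : 'I_k -> int) : Prop :=
  [/\ forall i, vhomog dg (fam i) (dgk i),
      forall x, X x <-> rspan I (fun y => exists i, y = fam i) x &
      forall i, ~ (forall x, X x ->
                    rspan I (fun y => exists i', i' != i /\ y = fam i') x)].

Definition img (I : ser -> Prop) m k (fam : 'I_k -> vec m) : vec m -> Prop :=
  rspan I (fun y => exists i, y = fam i).

(** kernel of the homomorphism e_i |-> fam i (elements mod I) *)
Definition ker (I : ser -> Prop) m k (fam : 'I_k -> vec m) (x : vec k) : Prop :=
  (forall i, fin_supp (x i)) /\
  forall j, I (\big[seradd/ser0]_(i < k) sermul (fam i j) (x i)).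

(** A minimal graded free right resolution of N = P_0 / M, P_0 = (+)_{j<r} A[-delta_j]:
     P_{i+1} = (+)_{l < rk i} A[-dg i l];
     phi0 : P_1 -> P_0 (e_l |-> phi0 l),  phi i : P_{i+2} -> P_{i+1}.
   Syzygies: M_1 = M = img phi0 ; M_{i+2} = img (phi i) = ker of P_{i+1} -> P_i. *)
Definition min_graded_res (I : ser -> Prop) r (delta : 'I_r -> int)
    (M : vec r -> Prop) (rk : nat -> nat) (dg : forall i, 'I_(rk i) -> int)
    (phi0 : 'I_(rk 0%N) -> vec r) (phi : forall i, 'I_(rk i.+1) -> vec (rk i))
    : Prop :=
  [/\ fam_min_basis I delta M phi0 (dg 0%N),
      forall x, ker I phi0 x <-> img I (phi 0%N) x,
      forall i, fam_min_basis I (dg i) (img I (phi i)) (phi i) (dg i.+1) &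
      forall i x, ker I (phi i) x <-> img I (phi i.+1) x].

End FreeAlgebra.

(* Main.v *)
Require Import Defs.
From HB Require Import structures.
From mathcomp Require Import all_boot all_order all_algebra zify.
From Stdlib Require Import FunctionalExtensionality Classical_Prop.
Import Order.TTheory GRing.Theory Num.Theory.
Local Open Scope ring_scope.

Lemma natfact (z k a b : nat) : z = (a + b)%N -> (z - k)%N = b -> (k <= z)%N -> k = a.
Proof. lia. Qed.

Lemma fin_union (T : finType) (U : eqType) (A : T -> U -> Prop) :
  (forall i, exists s : seq U, forall x, A i x -> x \in s) ->
  exists s : seq U, forall i x, A i x -> x \in s.
Proof.
move=> H.
suff H' : forall r : seq T, exists s : seq U, forall i, i \in r -> forall x, A i x -> x \in s.
  by have [s Hs] := H' (enum T); exists s => i x; apply: Hs; rewrite mem_enum.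
elim => [|i r [s Hs]]; first by exists [::].
have [t Ht] := H i; exists (t ++ s) => i'; rewrite inE => /orP [/eqP ->|Hi] x Hx.
  by rewrite mem_cat Ht.
by rewrite mem_cat (Hs i') ?orbT.
Qed.

Lemma prefix_le (T : eqType) (a b z : seq T) :
  prefix a z -> prefix b z -> (size a <= size b)%N -> prefix a b.
Proof.
move=> /prefixP [a' Ha] /prefixP [b' Hb] Hs; rewrite prefixE.
have E1 : take (size a) z = a by rewrite Ha take_size_cat.
have E2 : take (size a) z = take (size a) b.
  rewrite Hb take_cat; case: ltnP => // Hge.
  have Heq : size a = size b by apply/eqP; rewrite eqn_leq Hs Hge.
  by rewrite Heq subnn take0 cats0 take_size.
by rewrite -E2 E1.
Qed.

Lemma suffix_le (T : eqType) (a b z : seq T) :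
  suffix a z -> suffix b z -> (size a <= size b)%N -> suffix a b.
Proof.
rewrite /suffix => Ha Hb Hs; apply: prefix_le Ha Hb _; by rewrite !size_rev.
Qed.

Lemma prefix_size_eq (T : eqType) (a b : seq T) : prefix a b -> size a = size b -> a = b.
Proof.
move=> /prefixP [c ->]; rewrite size_cat => H.
have Hc : size c = 0%N by lia.
by rewrite (size0nil Hc) cats0.
Qed.

Lemma infix_size_eq (T : eqType) (a b : seq T) : infix a b -> size a = size b -> a = b.
Proof.
move=> /infixP [p [q ->]]; rewrite !size_cat => H.
have Hp : size p = 0%N by lia.
have Hq : size q = 0%N by lia.
by rewrite (size0nil Hp) (size0nil Hq) cats0.
Qed.

Lemma prefix_neq_lt (T : eqType) (a b : seq T) : prefix a b -> a != b -> (size a < size b)%N.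
Proof.
move=> Hp Hne; rewrite ltn_neqAle; apply/andP; split.
  by apply: contra Hne => /eqP Hs; apply/eqP; exact: prefix_size_eq.
by case/prefixP: Hp => c ->; rewrite size_cat leq_addr.
Qed.

Section Work.
Variables (K : fieldType) (n : nat) (G : seq (word n)).
Local Notation wd := (word n).
Local Notation sr := (ser K n).
Local Notation s0 := (@ser0 K n).

Definition smono (c : K) (u : wd) : sr := fun w => if w == u then c else 0.

Lemma mono_smono (u : wd) : mono K u = smono 1 u.
Proof. by apply: functional_extensionality => w; rewrite /mono /smono; case: (w == u). Qed.

Lemma sermul_nz (f g : sr) w : sermul f g w != 0 ->
  exists i, (i <= size w)%N /\ f (take i w) != 0 /\ g (drop i w) != 0.
Proof.
rewrite /sermul => H.
case: (boolP [exists i : 'I_(size w).+1, (f (take i w) != 0) && (g (drop i w) != 0)]).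
  by move/existsP=> [i /andP[H1 H2]]; exists i; rewrite -ltnS ltn_ord.
move/existsPn => Hn; case/eqP: H; apply: big1 => i _.
move: (Hn i); rewrite negb_and !negbK => /orP[] /eqP ->; by rewrite ?mul0r ?mulr0.
Qed.

Lemma smono_mull (c : K) u (g : sr) w :
  sermul (smono c u) g w = if prefix u w then c * g (drop (size u) w) else 0.
Proof.
rewrite /sermul /smono.
case: ifP => [/prefixP [v ->]|Hp].
  have Hu : (size u < (size (u ++ v)).+1)%N by rewrite ltnS size_cat leq_addr.
  rewrite (bigD1 (Ordinal Hu)) //= take_size_cat // eqxx drop_size_cat //.
  rewrite big1 ?addr0 // => i /eqP Hi; case: ifP => [/eqP Ht|]; last by rewrite mul0r.
  exfalso; apply: Hi; apply: val_inj => /=.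
  have Hi' := ltn_ord i; rewrite ltnS in Hi'.
  have := congr1 size Ht; rewrite size_takel //; lia.
rewrite big1 // => i _; case: ifP => [/eqP Ht|]; last by rewrite mul0r.
by move: Hp; rewrite -Ht prefix_take.
Qed.

Lemma smono_mulr (f : sr) (c : K) v w :
  sermul f (smono c v) w = if suffix v w then f (take (size w - size v) w) * c else 0.
Proof.
rewrite /sermul /smono.
case: ifP => [/suffixP [u ->]|Hp].
  have Hu : (size u < (size (u ++ v)).+1)%N by rewrite ltnS size_cat leq_addr.
  have -> : (size (u ++ v) - size v = size u)%N by rewrite size_cat addnK.
  rewrite (bigD1 (Ordinal Hu)) //= drop_size_cat // eqxx take_size_cat //.
  rewrite big1 ?addr0 // => i /eqP Hi; case: ifP => [/eqP Ht|]; last by rewrite mulr0.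
  exfalso; apply: Hi; apply: val_inj => /=.
  have := congr1 size Ht; rewrite size_drop => Hs.
  have := ltn_ord i; rewrite ltnS => Hi'.
  move: Hs Hi'; have := size_cat u v; move: (nat_of_ord i) => k; move: (size (u ++ v)) => z; exact: natfact.
rewrite big1 // => i _; case: ifP => [/eqP Ht|]; last by rewrite mulr0.
by move: Hp; rewrite -Ht suffix_drop.
Qed.

Lemma sermul0l (g : sr) : sermul (s0) g = s0.
Proof. apply: functional_extensionality => w; rewrite /sermul big1 // => i _; by rewrite /ser0 mul0r. Qed.
Lemma sermul0r (g : sr) : sermul g (s0) = s0.
Proof. apply: functional_extensionality => w; rewrite /sermul big1 // => i _; by rewrite /ser0 mulr0. Qed.
Lemma sermulDr (f a b : sr) : sermul f (seradd a b) = seradd (sermul f a) (sermul f b).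
Proof. apply: functional_extensionality => w; rewrite /sermul /seradd -big_split /=.
by apply: eq_bigr => i _; rewrite mulrDr. Qed.
Lemma sermulDl (f a b : sr) : sermul (seradd a b) f = seradd (sermul a f) (sermul b f).
Proof. apply: functional_extensionality => w; rewrite /sermul /seradd -big_split /=.
by apply: eq_bigr => i _; rewrite mulrDl. Qed.

Lemma smono_mul a b u v : sermul (smono a u) (smono b v) = smono (a * b) (u ++ v).
Proof.
apply: functional_extensionality => w; rewrite smono_mull /smono.
case: ifP => [/prefixP [z ->]|Hp].
  by rewrite drop_size_cat // eqseq_cat // eqxx /=; case: (z == v); rewrite ?mulr0.
by case: ifP => // /eqP Hw; move: Hp; rewrite Hw prefix_prefix.
Qed.

Lemma smono0 u : smono 0 u = s0.
Proof. by apply: functional_extensionality => w; rewrite /smono; case: ifP. Qed.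

Lemma fin_supp0 : fin_supp (s0).
Proof. by exists [::] => w; rewrite /ser0 eqxx. Qed.
Lemma fin_supp_smono c u : fin_supp (smono c u).
Proof. exists [:: u] => w; rewrite /smono inE; by case: ifP => //; rewrite eqxx. Qed.
Lemma fin_supp_mono (u : wd) : fin_supp (mono K u).
Proof. rewrite mono_smono; exact: fin_supp_smono. Qed.
Lemma fin_supp_add (f g : sr) : fin_supp f -> fin_supp g -> fin_supp (seradd f g).
Proof.
move=> [s Hs] [t Ht]; exists (s ++ t) => w; rewrite /seradd mem_cat => H.
case: (boolP (f w != 0)) => [/Hs -> //| /negPn /eqP Hf]; rewrite Hf add0r in H.
by rewrite Ht ?orbT.
Qed.
Lemma fin_supp_opp (f : sr) : fin_supp f -> fin_supp (seropp f).
Proof. by move=> [s Hs]; exists s => w; rewrite /seropp oppr_eq0; exact: Hs. Qed.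
Lemma fin_supp_mul (f g : sr) : fin_supp f -> fin_supp g -> fin_supp (sermul f g).
Proof.
move=> [s Hs] [t Ht]; exists [seq x ++ y | x <- s, y <- t] => w /sermul_nz [i [_ [H1 H2]]].
by rewrite -(cat_take_drop i w); apply: allpairs_f; [apply: Hs|apply: Ht].
Qed.

Definition red (L : seq wd) (w : wd) := has (fun g => infix g w) L.

Lemma red_infix L u w : infix u w -> red L u -> red L w.
Proof. move=> Hi /hasP [g Hg Hgi]; apply/hasP; exists g => //; exact: infix_trans Hgi Hi. Qed.
Lemma red_catl L p w : red L w -> red L (p ++ w).
Proof. apply: red_infix; exact: suffix_infix. Qed.
Lemma red_catr L w q : red L w -> red L (w ++ q).
Proof. apply: red_infix; exact: prefix_infix. Qed.
Lemma red_take L w i : red L (take i w) -> red L w.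
Proof. apply: red_infix; exact: infix_take. Qed.
Lemma red_drop L w i : red L (drop i w) -> red L w.
Proof. apply: red_infix; exact: infix_drop. Qed.

Lemma monidealP (L : seq wd) (f : sr) :
  monideal L f <-> fin_supp f /\ forall w, f w != 0 -> red L w.
Proof.
split.
  elim => {f} [f [g Hg ->]| |f g _ [Hf1 Hf2] _ [Hg1 Hg2]|a f Ha _ [Hf1 Hf2]|f a Ha _ [Hf1 Hf2]].
  - split; first exact: fin_supp_mono.
    move=> w; rewrite /mono; case: (w =P g) => [->|]; last by rewrite eqxx.
    by move=> _; apply/hasP; exists g => //; exact: infix_refl.
  - by split; [exact: fin_supp0| move=> w; rewrite /ser0 eqxx].
  - split; first exact: fin_supp_add.
    move=> w; rewrite /seradd; case: (boolP (f w != 0)) => [/Hf2 //| /negPn /eqP ->].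
    by rewrite add0r; exact: Hg2.
  - split; first exact: fin_supp_mul.
    by move=> w /sermul_nz [i [_ [_ /Hf2]]]; apply: red_drop.
  - split; first exact: fin_supp_mul.
    by move=> w /sermul_nz [i [_ [/Hf2 H _]]]; apply: red_take H.
move=> [[s Hs] Hr].
elim: s f Hs Hr => [|u s IH] f Hs Hr.
  have -> : f = s0.
    apply: functional_extensionality => w; apply/eqP; apply: contraT => /Hs; by rewrite in_nil.
  exact: ig_zero.
pose f' : sr := fun w => if w == u then 0 else f w.
have -> : f = seradd f' (smono (f u) u).
  apply: functional_extensionality => w; rewrite /seradd /f' /smono.
  by case: (w =P u) => [->|]; rewrite ?add0r ?addr0.
apply: ig_add.
  apply: IH => w; rewrite /f'; case: (w =P u) => [_|/eqP Hwu Hf]; rewrite ?eqxx //.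
    by move: (Hs w Hf); rewrite inE (negPf Hwu).
  by apply: Hr.
case: (boolP (f u == 0)) => [/eqP ->|Hfu]; first by rewrite smono0; exact: ig_zero.
move: (Hr u Hfu) => /hasP [g Hg /infixP [p [q Hpq]]].
have -> : smono (f u) u = sermul (sermul (smono (f u) p) (mono K g)) (smono 1 q).
  by rewrite mono_smono !smono_mul !mulr1 -catA -Hpq.
apply: ig_rmul; first exact: fin_supp_smono.
apply: ig_lmul; first exact: fin_supp_smono.
by apply: ig_gen; exists g.
Qed.

Local Notation I := (monideal (K:=K) G).

Definition minGb (g : wd) := all (fun g' => infix g' g ==> (g' == g)) G.

Lemma obstruction (w v : wd) : ~~ red G w -> red G (w ++ v) -> ~~ red G v ->
  (forall i, (i < size v)%N -> ~~ red G (w ++ take i v)) ->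
  exists g, [/\ g \in G, minGb g, (size v < size g)%N & suffix v g].
Proof.
move=> Hw Hwv Hv Hpre.
have Hv0 : (0 < size v)%N.
  rewrite lt0n; apply/negP => /eqP /size0nil Hv0; by move: Hwv; rewrite Hv0 cats0 (negPf Hw).
have Hsuf : forall g, g \in G -> infix g (w ++ v) -> suffix g (w ++ v).
  move=> g Hg /infixP [p [q Hz]]; case: q Hz => [|c q] Hz.
    by rewrite Hz cats0; exact: suffix_suffix.
  exfalso.
  have Ht : take (size (w ++ v)).-1 (w ++ v) = w ++ take (size v).-1 v.
    rewrite take_cat size_cat; case: ltnP => H; first by lia.
    congr (_ ++ take _ _); lia.
  have Hpz : prefix (p ++ g) (take (size (w ++ v)).-1 (w ++ v)).
    apply: (@prefix_le _ _ _ (w ++ v)); first by rewrite Hz catA; exact: prefix_prefix.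
      exact: prefix_take.
    rewrite size_takel; last by apply: leq_pred.
    by rewrite Hz !size_cat /=; lia.
  have := Hpre (size v).-1; rewrite ltn_predL Hv0 => /(_ isT) /negP; apply; rewrite -Ht.
  apply/hasP; exists g => //; apply: infix_trans (prefixW Hpz).
  exact: suffix_infix.
have Hex : exists k, has (fun g => suffix g (w ++ v) && (size g == k)) G.
  case/hasP: Hwv => g Hg Hi; exists (size g); apply/hasP; exists g => //.
  by rewrite Hsuf // eqxx.
case: (ex_minnP Hex) => k /hasP [g Hg /andP [Hgz /eqP Hk]] Hmin.
exists g; split => //.
- apply/allP => g' Hg'; apply/implyP => Hinf.
  have Hg'z : suffix g' (w ++ v) by apply: Hsuf => //; exact: infix_trans Hinf (suffixW Hgz).
  have Hle : (k <= size g')%N by apply: Hmin; apply/hasP; exists g' => //; rewrite Hg'z eqxx.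
  have Hle2 := size_infix Hinf.
  by apply/eqP; apply: infix_size_eq Hinf _; apply/eqP; rewrite eqn_leq Hle2 Hk Hle.
- rewrite ltnNge; apply/negP => Hs; move/negP: Hv; apply.
  apply/hasP; exists g => //; apply: suffixW.
  by apply: (@suffix_le _ _ _ (w ++ v)) => //; exact: suffix_suffix.
- apply: (@suffix_le _ _ _ (w ++ v)) => //; first exact: suffix_suffix.
  rewrite leqNgt; apply/negP => Hs; move/negP: Hv; apply.
  apply/hasP; exists g => //; apply: suffixW.
  by apply: (@suffix_le _ _ _ (w ++ v)) => //; [exact: suffix_suffix|exact: ltnW].
Qed.

Definition cands : seq wd := [seq drop i g | g <- G, i <- iota 0 (size g).+1].

Lemma suffix_cands g v : g \in G -> suffix v g -> v \in cands.
Proof.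
move=> Hg; rewrite suffixE => /eqP <-; rewrite /cands.
apply/allpairsPdep; exists g, (size g - size v)%N; split => //.
by rewrite mem_iota /= add0n ltnS leq_subr.
Qed.

Section Vec.
Variable m : nat.
Local Notation vc := (vec K n m).
Local Notation v0 := (@vzero K n m).

Definition vsing (j : 'I_m) (u : wd) (c : K) : vc :=
  fun j' => if j' == j then smono c u else s0.

Lemma rspan_mono (S S' : vc -> Prop) x :
  (forall y, S y -> rspan I S' y) -> rspan I S x -> rspan I S' x.
Proof.
move=> HS; elim => {x} [x /HS //| |x y _ Hx _ Hy|x a Ha _ Hx|x y _ Hx Hxy].
- exact: rs_zero.
- exact: rs_add.
- exact: rs_mul.
- exact: rs_eq Hx Hxy.
Qed.

Lemma sersubE (f g : sr) w : sersub f g w = f w - g w.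
Proof. by []. Qed.

Lemma rspan_supp (S : vc -> Prop) (P : 'I_m -> wd -> Prop) x :
  (forall y, S y -> exists j w, P j w /\ y = vmono K j w) ->
  rspan I S x -> (forall j, fin_supp (x j)) /\
     forall j u, x j u != 0 -> red G u \/ exists w, P j w /\ prefix w u.
Proof.
move=> HS; elim => {x} [x /HS [j [w [Hp ->]]]| |x y _ [Hx1 Hx2] _ [Hy1 Hy2]|x a Ha _ [Hx1 Hx2]|x y _ [Hx1 Hx2] Hxy].
- split=> [j'|j' u]; rewrite /vmono; case: ifP => [/eqP Hj|_]; try subst j'.
  + exact: fin_supp_mono.
  + exact: fin_supp0.
  + rewrite /mono; case: (u =P w) => [-> _|]; last by rewrite eqxx.
    by right; exists w; split => //; exact: prefix_refl.
  + by rewrite /ser0 eqxx.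
- by split => [j|j u]; [exact: fin_supp0| rewrite /vzero /ser0 eqxx].
- split => [j|j u]; first exact: fin_supp_add.
  rewrite /vadd /seradd; case: (boolP (x j u != 0)) => [/Hx2 //| /negPn /eqP ->].
  by rewrite add0r; exact: Hy2.
- split => [j|j u]; first exact: fin_supp_mul.
  move=> /sermul_nz [i [_ [/Hx2 [H|[w [Hp Hw]]] _]]]; first by left; exact: red_take H.
  by right; exists w; split => //; exact: prefix_trans Hw (prefix_take _ _).
- have Hyx j : y j = seradd (sersub (y j) (x j)) (x j).
    apply: functional_extensionality => w; rewrite /seradd sersubE; by rewrite subrK.
  have /(_ _) /monidealP HI := Hxy.
  split => [j|j u].
    by rewrite Hyx; apply: fin_supp_add => //; case: (HI j).
  rewrite Hyx /seradd; case: (boolP (x j u != 0)) => [/Hx2 //| /negPn /eqP ->].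
  by rewrite addr0 => /(proj2 (HI j)) H; left.
Qed.

Lemma vsing_mul (j : 'I_m) w v c :
  vsing j (w ++ v) c = vmulr (vmono K j w) (smono c v).
Proof.
apply: functional_extensionality => j'; rewrite /vsing /vmulr /vmono.
case: (j' == j); last by rewrite sermul0l.
by rewrite mono_smono smono_mul mul1r.
Qed.

Lemma rspan_cover (S : vc -> Prop) (x : vc) :
  (forall j, fin_supp (x j)) ->
  (forall j u, x j u != 0 -> red G u \/ exists w, prefix w u /\ rspan I S (vmono K j w)) ->
  rspan I S x.
Proof.
move=> Hf.
have [s Hs] : exists s : seq ('I_m * wd), forall j u, x j u != 0 -> (j, u) \in s.
  have [s Hs] : exists s : seq ('I_m * wd), forall j p, (p.1 = j /\ x j p.2 != 0) -> p \in s.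
    apply: fin_union => j; have [t Ht] := Hf j; exists [seq (j, u) | u <- t].
    by move=> -[j' u] /= [-> H2]; apply: map_f; exact: Ht.
  by exists s => j u H; apply: (Hs j (j, u)).
elim: s x Hs {Hf} => [|[j0 u0] s IH] x Hs Hc.
  have -> : x = v0.
    apply: functional_extensionality => j; apply: functional_extensionality => u.
    apply/eqP; apply: contraT => /Hs; by rewrite in_nil.
  exact: rs_zero.
pose x' : vc := fun j u => if (j == j0) && (u == u0) then 0 else x j u.
have -> : x = vadd x' (vsing j0 u0 (x j0 u0)).
  apply: functional_extensionality => j; apply: functional_extensionality => u.
  rewrite /vadd /seradd /x' /vsing /smono.
  by case: (j =P j0) => [->|]; case: (u =P u0) => [->|] /=; rewrite ?add0r ?addr0 /ser0 ?addr0.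
apply: rs_add.
  apply: IH => j u; rewrite /x'.
    case: (j =P j0) => [->|/eqP Hj]; case: (u =P u0) => [->|/eqP Hu] /=; rewrite ?eqxx // => H.
    + by move: (Hs _ _ H); rewrite inE xpair_eqE eqxx (negPf Hu).
    + by move: (Hs _ _ H); rewrite inE xpair_eqE (negPf Hj).
    + by move: (Hs _ _ H); rewrite inE xpair_eqE (negPf Hj).
  rewrite /x'; case: ifP => _; [by rewrite eqxx | exact: Hc].
case: (boolP (x j0 u0 == 0)) => [/eqP ->|Hx].
  have -> : vsing j0 u0 0 = v0.
    apply: functional_extensionality => j; rewrite /vsing smono0; by case: ifP.
  exact: rs_zero.
case: (Hc _ _ Hx) => [Hr|[w [/prefixP [v ->] Hw]]].
  apply: (rs_eq (x := v0)); first exact: rs_zero.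
  move=> j; rewrite /vsing; apply/monidealP; split.
    case: ifP => _; apply: fin_supp_add; try apply: fin_supp_opp; by [exact: fin_supp_smono|exact: fin_supp0].
  move=> u; rewrite sersubE /vzero /ser0 subr0; case: ifP => _; last by rewrite eqxx.
  by rewrite /smono; case: (u =P u0) => [->|]; rewrite ?eqxx.
rewrite vsing_mul; apply: rs_mul => //; exact: fin_supp_smono.
Qed.


Definition famT (T : seq ('I_m * wd)) : 'I_(size T) -> vc :=
  fun l => vmono K (tnth (in_tuple T) l).1 (tnth (in_tuple T) l).2.

Lemma famT_ex T y : (exists l, y = famT T l) <-> exists j w, (j, w) \in T /\ y = vmono K j w.
Proof.
split.
  move=> [l ->]; exists (tnth (in_tuple T) l).1, (tnth (in_tuple T) l).2; split => //.
  by rewrite -surjective_pairing; exact: mem_tnth.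
move=> [j [w [Hjw ->]]].
have Hi : (index (j, w) T < size T)%N by rewrite index_mem.
exists (Ordinal Hi); rewrite /famT (tnth_nth (j, w)) /= nth_index //.
Qed.

Definition reduced (T : seq ('I_m * wd)) :=
  [/\ uniq T, forall p, p \in T -> ~~ red G p.2 &
      forall p q, p \in T -> q \in T -> p.1 = q.1 -> prefix p.2 q.2 -> p = q].

Lemma img_famT_supp T x : img I (famT T) x ->
  (forall j, fin_supp (x j)) /\
  forall j u, x j u != 0 -> red G u \/ exists w, (j, w) \in T /\ prefix w u.
Proof.
apply: rspan_supp => y /famT_ex [j [w [H ->]]]; by exists j, w.
Qed.

Lemma img_famT_cover T x : (forall j, fin_supp (x j)) ->
  (forall j u, x j u != 0 -> red G u \/ exists w, (j, w) \in T /\ prefix w u) ->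
  img I (famT T) x.
Proof.
move=> Hf Hc; apply: rspan_cover => // j u /Hc [H|[w [H1 H2]]]; [by left|right].
exists w; split => //; apply: rs_gen; apply/famT_ex; by exists j, w.
Qed.

Definition dgT (dg : 'I_m -> int) (T : seq ('I_m * wd)) : 'I_(size T) -> int :=
  fun l => (size (tnth (in_tuple T) l).2)%:Z + dg (tnth (in_tuple T) l).1.

Lemma tnth_inj (T : seq ('I_m * wd)) (l l' : 'I_(size T)) : uniq T ->
  tnth (in_tuple T) l = tnth (in_tuple T) l' -> l = l'.
Proof.
move=> Hu; have x0 := tnth (in_tuple T) l.
rewrite !(tnth_nth x0) /= => /eqP; rewrite nth_uniq // => /eqP H; exact: val_inj.
Qed.

Lemma famT_min dg T : reduced T -> fam_min_basis I dg (img I (famT T)) (famT T) (dgT dg T).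
Proof.
move=> [Hu Hr Hpf]; split => //.
  move=> l j w; rewrite /famT /vmono; case: (boolP (j == _)) => [/eqP Hj|]; last by rewrite /ser0 eqxx.
  rewrite /mono; case: (boolP (w == _)) => [/eqP Hw _|]; last by rewrite eqxx.
  by rewrite /dgT Hj Hw.
move=> l H.
have HS : forall y, (exists l', l' != l /\ y = famT T l') ->
    exists j w, (fun j w => exists l', l' != l /\ (j, w) = tnth (in_tuple T) l') j w /\ y = vmono K j w.
  move=> y [l' [Hne ->]]; exists (tnth (in_tuple T) l').1, (tnth (in_tuple T) l').2; split => //.
  by exists l'; split; last by rewrite -surjective_pairing.
move: (@rspan_supp _ _ _ HS (H (famT T l) (rs_gen _ (ex_intro _ l erefl)))).
case=> _ /(_ (tnth (in_tuple T) l).1 (tnth (in_tuple T) l).2).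
rewrite /famT /vmono eqxx /mono eqxx oner_eq0 => /(_ isT) [|[w [[l' [Hl' Hq]] Hp]]].
  by apply/negP; apply: Hr; exact: mem_tnth.
have Hq' := Hpf _ _ (mem_tnth l' (in_tuple T)) (mem_tnth l (in_tuple T)).
rewrite -Hq /= in Hq'.
have E := Hq' erefl Hp.
by move: Hl'; rewrite (@tnth_inj T _ _ Hu (etrans (esym Hq) E)) eqxx.
Qed.


Definition wT (T : seq ('I_m * wd)) (l : 'I_(size T)) : wd := (tnth (in_tuple T) l).2.
Definition jT (T : seq ('I_m * wd)) (l : 'I_(size T)) : 'I_m := (tnth (in_tuple T) l).1.

Lemma big_eval (k : nat) (F : 'I_k -> sr) z :
  (\big[@seradd K n/s0]_(l < k) F l) z = \sum_(l < k) F l z.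
Proof. by elim/big_rec2: _ => [|i f g _ <-]. Qed.

Lemma sum_nz (k : nat) (F : 'I_k -> K) : \sum_(l < k) F l != 0 -> exists l, F l != 0.
Proof.
move=> H; case: (boolP [exists l, F l != 0]) => [/existsP //|/existsPn Hn].
by case/eqP: H; apply: big1 => l _; move: (Hn l); rewrite negbK => /eqP.
Qed.

Lemma famT_mul_eval T l j (a : sr) z :
  sermul (famT T l j) a z =
  if (j == jT T l) && prefix (wT T l) z then a (drop (size (wT T l)) z) else 0.
Proof.
rewrite /famT /vmono /jT /wT; case: (j == _) => /=; last by rewrite sermul0l.
by rewrite mono_smono smono_mull; case: ifP; rewrite ?mul1r.
Qed.

Lemma fin_supp_famT T l j : fin_supp (famT T l j).
Proof. rewrite /famT /vmono; case: ifP => _; [exact: fin_supp_mono|exact: fin_supp0]. Qed.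

Lemma ker_famT T x : reduced T ->
  ker I (famT T) x <->
  (forall l, fin_supp (x l)) /\ forall l u, x l u != 0 -> red G (wT T l ++ u).
Proof.
move=> [Hu Hr Hpf]; split.
  move=> [Hf Hk]; split => // l u Hx.
  have /monidealP [_ Hred] := Hk (jT T l); apply: Hred.
  rewrite big_eval (bigD1 l) //= famT_mul_eval eqxx prefix_prefix drop_size_cat //=.
  rewrite big1 ?addr0 // => l' Hl'; rewrite famT_mul_eval.
  case: (boolP (jT T l == jT T l')) => [/eqP Hj|] //=; case: ifP => // Hp.
  exfalso; move/negP: Hl'; apply.
  have H1 : (tnth (in_tuple T) l) \in T by exact: mem_tnth.
  have H2 : (tnth (in_tuple T) l') \in T by exact: mem_tnth.
  have Hpl : prefix (wT T l) (wT T l ++ u) by exact: prefix_prefix.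
  case: (leqP (size (wT T l)) (size (wT T l'))) => Hs.
    have := Hpf _ _ H1 H2 Hj (@prefix_le _ _ _ _ Hpl Hp Hs).
    by move/(@tnth_inj T _ _ Hu) ->.
  have := Hpf _ _ H2 H1 (esym Hj) (@prefix_le _ _ _ _ Hp Hpl (ltnW Hs)).
  by move/(@tnth_inj T _ _ Hu) ->.
move=> [Hf Hc]; split => // j; apply/monidealP; split.
  elim/big_rec: _ => [|i f _ Hf']; first exact: fin_supp0.
  by apply: fin_supp_add => //; apply: fin_supp_mul => //; exact: fin_supp_famT.
move=> z; rewrite big_eval => /sum_nz [l]; rewrite famT_mul_eval.
case: ifP => [/andP [_ /prefixP [u ->]]|]; last by rewrite eqxx.
by rewrite drop_size_cat // => /Hc.
Qed.


Definition Sdec (T : seq ('I_m * wd)) (l : 'I_(size T)) (v : wd) :=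
  [&& red G (wT T l ++ v), ~~ red G v & all (fun i => ~~ red G (wT T l ++ take i v)) (iota 0 (size v))].

Definition T2 (T : seq ('I_m * wd)) : seq ('I_(size T) * wd) :=
  undup [seq p <- [seq (l, v) | l <- enum 'I_(size T), v <- cands] | Sdec T p.1 p.2].

Lemma Sdec_obs T l v : reduced T -> Sdec T l v ->
  exists g, [/\ g \in G, minGb g, (size v < size g)%N & suffix v g].
Proof.
move=> [_ Hr _] /and3P [H1 H2 /allP H3].
have Hw : ~~ red G (wT T l) by exact: (Hr _ (mem_tnth l (in_tuple T))).
apply: (@obstruction _ _ Hw H1 H2).
by move=> i Hi; apply: H3; rewrite mem_iota.
Qed.

Lemma T2_mem T l v : reduced T -> ((l, v) \in T2 T) = Sdec T l v.
Proof.
move=> HT; rewrite mem_undup mem_filter /=; apply/andP/idP => [[]//|Hs]; split => //.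
apply: allpairs_f; first by rewrite mem_enum.
have [g [Hg _ _ Hsuf]] := @Sdec_obs _ _ _ HT Hs; exact: suffix_cands Hsuf.
Qed.

End Vec.
Arguments famT {m} T _.
Arguments reduced {m} T.
Arguments dgT {m} dg T _.
Arguments wT {m} T l.
Arguments jT {m} T l.
Arguments Sdec {m} T l v.
Arguments T2 {m} T.
Arguments vsing {m} j u c _.

Lemma T2_reduced m (T : seq ('I_m * wd)) : reduced T -> reduced (T2 T).
Proof.
move=> HT; split; first exact: undup_uniq.
  by move=> [l v]; rewrite T2_mem // => /and3P [].
move=> [l v] [l' v'] /=; rewrite !T2_mem // => H1 H2 Hl Hp; subst l'.
case: (boolP (v == v')) => [/eqP -> //|Hne].
have Hlt := @prefix_neq_lt _ _ _ Hp Hne.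
move: H1 H2 => /and3P [Hr _ _] /and3P [_ _ /allP Hall].
have := Hall (size v); rewrite mem_iota Hlt => /(_ isT).
by move: Hp; rewrite prefixE => /eqP ->; rewrite Hr.
Qed.

Lemma ker_T2 m (T : seq ('I_m * wd)) x : reduced T -> ker I (famT T) x <-> img I (famT (T2 T)) x.
Proof.
move=> HT; rewrite ker_famT //; split.
  move=> [Hf Hc]; apply: img_famT_cover => // l u Hx.
  case: (boolP (red G u)) => Hu; first by left.
  right.
  have Hex : exists i, red G (wT T l ++ take i u) by exists (size u); rewrite take_size; exact: Hc.
  case: (ex_minnP Hex) => i Hi Hmin.
  exists (take i u); split; last exact: prefix_take.
  rewrite T2_mem //; apply/and3P; split => //.
    by apply: contra Hu; apply: red_take.
  apply/allP => i'; rewrite mem_iota /= add0n => Hi'.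
  have Hii : (i' < i)%N.
    move: Hi'; rewrite size_take; case: ifP => // /negbT; rewrite -leqNgt => H1 H2; exact: leq_trans H2 H1.
  rewrite take_takel ?(ltnW Hii) //.
  by apply/negP => /Hmin; rewrite leqNgt Hii.
move/img_famT_supp => [Hf Hc]; split => // l u /Hc [Hr|[v [Hv Hp]]].
  exact: red_catl.
move: Hv; rewrite T2_mem // => /and3P [Hr _ _].
apply: red_infix Hr; apply: prefixW; move/prefixP: Hp => [s ->]; rewrite catA; exact: prefix_prefix.
Qed.


Lemma int_shift (a b : nat) (c e : int) : (b <= a)%N ->
  ((((a - b)%N)%:Z + c == e - b%:Z) = ((a%:Z) + c == e)).
Proof. by move=> H; apply/eqP/eqP; lia. Qed.

Section Vec2.
Variable m : nat.
Local Notation vc := (vec K n m).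
Local Notation v0 := (@vzero K n m).

Definition proj (dg : 'I_m -> int) (e : int) (x : vc) : vc :=
  fun j w => if (size w)%:Z + dg j == e then x j w else 0.

Lemma proj0 dg e : proj dg e v0 = v0.
Proof.
apply: functional_extensionality => j; apply: functional_extensionality => w.
by rewrite /proj; case: ifP.
Qed.

Lemma projD dg e x y : proj dg e (vadd x y) = vadd (proj dg e x) (proj dg e y).
Proof.
apply: functional_extensionality => j; apply: functional_extensionality => w.
by rewrite /proj /vadd /seradd; case: ifP; rewrite ?addr0.
Qed.

Lemma tnth_index (T : seq ('I_m * wd)) p : p \in T -> exists l, tnth (in_tuple T) l = p.
Proof.
move=> Hp; have Hi : (index p T < size T)%N by rewrite index_mem.
by exists (Ordinal Hi); rewrite (tnth_nth p) /= nth_index.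
Qed.

Lemma proj_span dg (B : vc -> Prop) x :
  (forall y, B y -> exists e, vhomog dg y e) -> rspan I B x ->
  forall e, rspan I (fun y => B y /\ exists e', e' <= e /\ vhomog dg y e') (proj dg e x).
Proof.
move=> HB; elim => {x} [x Bx| |x y _ Hx _ Hy|x a Ha _ Hx|x y _ Hx Hxy] e.
- have [e0 He0] := HB x Bx.
  case: (e0 =P e) => [<-|Hne].
    have -> : proj dg e0 x = x.
      apply: functional_extensionality => j; apply: functional_extensionality => w.
      rewrite /proj; case: eqP => // Hn; apply/eqP; apply: contraT => Hxw; by rewrite eq_sym in Hxw; case: (Hn (He0 _ _ Hxw)).
    by apply: rs_gen; split => //; exists e0; split.
  have -> : proj dg e x = v0.
    apply: functional_extensionality => j; apply: functional_extensionality => w.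
    rewrite /proj; case: eqP => // Hc; apply/eqP; apply: contraT => Hxw.
    by case: Hne; rewrite -Hc; exact: (esym (He0 _ _ Hxw)).
  exact: rs_zero.
- rewrite proj0; exact: rs_zero.
- rewrite projD; exact: rs_add.
- have [s Hs] := Ha; elim: s a Hs {Ha} => [|v s IHs] a Hs.
    have -> : a = s0.
      apply: functional_extensionality => w; apply/eqP; apply: contraT => /Hs; by rewrite in_nil.
    have -> : vmulr x s0 = v0 by apply: functional_extensionality => j; rewrite /vmulr sermul0r.
    rewrite proj0; exact: rs_zero.
  pose a' : sr := fun w => if w == v then 0 else a w.
  have -> : vmulr x a = vadd (vmulr x a') (vmulr x (smono (a v) v)).
    apply: functional_extensionality => j; rewrite /vmulr /vadd -sermulDr; congr sermul.
    apply: functional_extensionality => w; rewrite /seradd /a' /smono.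
    by case: (w =P v) => [->|]; rewrite ?add0r ?addr0.
  rewrite projD; apply: rs_add.
    apply: IHs => w; rewrite /a'; case: (w =P v) => [_|/eqP Hwv Haw]; first by rewrite eqxx.
    by move: (Hs w Haw); rewrite inE (negPf Hwv).
  have -> : proj dg e (vmulr x (smono (a v) v)) =
            vmulr (proj dg (e - (size v)%:Z) x) (smono (a v) v).
    apply: functional_extensionality => j; apply: functional_extensionality => w.
    rewrite /proj /vmulr !smono_mulr.
    case: (boolP (suffix v w)) => Hsuf; last by case: ifP.
    have Hle : (size v <= size w)%N by case/suffixP: Hsuf => u ->; rewrite size_cat leq_addl.
    rewrite size_takel ?leq_subr // int_shift //.
    by case: ifP; rewrite ?mul0r.
  apply: rs_mul; first exact: fin_supp_smono.
  apply: rspan_mono (Hx (e - (size v)%:Z)) => y [By [e' [He' Hy]]].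
  apply: rs_gen; split => //; exists e'; split => //.
  by apply: (le_trans He'); rewrite lerBlDr lerDl.
- apply: (rs_eq (Hx e)) => j.
  have /monidealP [[s Hs] Hr] := Hxy j.
  apply/monidealP; split.
    exists s => w; rewrite sersubE /proj; case: ifP => _; last by rewrite subrr eqxx.
    by move=> H; apply: Hs.
  move=> w; rewrite sersubE /proj; case: ifP => _; last by rewrite subrr eqxx.
  by move=> H; apply: Hr.
Qed.

Lemma bk_famT dg (T : seq ('I_m * wd)) D : (forall l, dgT dg T l <= D) ->
  bk_vanish I dg (img I (famT T)) D.
Proof.
move=> HD B [Bh Bx Bmin] b Bb _ e Hbe.
rewrite leNgt; apply/negP => HDe.
apply: (Bmin b Bb) => x Hx.
have Hb : rspan I (fun y => B y /\ y <> b) b.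
  have /img_famT_supp [Hf Hc] : img I (famT T) b by apply/Bx; exact: rs_gen.
  apply: rspan_cover => // j u Hu.
  case: (Hc j u Hu) => [Hr|[w [Hjw Hp]]]; [by left|right; exists w; split => //].
  have Hin : img I (famT T) (vmono K j w) by apply: rs_gen; apply/famT_ex; exists j, w.
  have HBv := proj1 (Bx _) Hin.
  have := @proj_span dg B _ Bh HBv ((size w)%:Z + dg j).
  have -> : proj dg ((size w)%:Z + dg j) (vmono K j w) = vmono K j w.
    apply: functional_extensionality => j'; apply: functional_extensionality => w'.
    rewrite /proj /vmono; case: (boolP (j' == j)) => [/eqP ->|_]; last by case: ifP.
    rewrite /mono; case: (boolP (w' == w)) => [/eqP ->|_]; [by rewrite eqxx | by case: ifP].
  apply: rspan_mono => y [By [e' [He' Hy]]]; apply: rs_gen; split => // Hyb; subst y.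
  have E1 := Hy j u Hu; have E2 := Hbe j u Hu.
  have [l Hl] := @tnth_index T _ Hjw.
  have := HD l; rewrite /dgT Hl /= => HDl.
  move: HDe He' HDl; rewrite -E1 -E2 => H1 H2 H3.
  have := le_lt_trans (le_trans H2 H3) H1; by rewrite ltxx.
apply: rspan_mono (proj1 (Bx x) Hx) => y By.
case: (classic (y = b)) => [->|Hyb] //; apply: rs_gen; split => //.
Qed.

End Vec2.

Lemma ideal_gen_mono (S S' : sr -> Prop) f :
  (forall y, S y -> ideal_gen S' y) -> ideal_gen S f -> ideal_gen S' f.
Proof.
move=> HS; elim => {f} [f /HS //| |f g _ Hf _ Hg|a f Ha _ Hf|f a Ha _ Hf].
- exact: ig_zero.
- exact: ig_add.
- exact: ig_lmul.
- exact: ig_rmul.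
Qed.

Definition G0 := [seq g <- G | minGb g].
Definition B0 : sr -> Prop := fun f => exists2 g, g \in G0 & f = mono K g.

Lemma red_G0 w : red G w = red G0 w.
Proof.
apply/idP/idP; last first.
  by case/hasP => g; rewrite mem_filter => /andP [_ Hg] Hi; apply/hasP; exists g.
move=> Hr.
have Hex : exists k, has (fun g => infix g w && (size g == k)) G.
  by case/hasP: Hr => g Hg Hi; exists (size g); apply/hasP; exists g => //; rewrite Hi eqxx.
case: (ex_minnP Hex) => k /hasP [g Hg /andP [Hi /eqP Hk]] Hmin.
apply/hasP; exists g => //; rewrite mem_filter Hg andbT.
apply/allP => g' Hg'; apply/implyP => Hinf.
have Hle : (k <= size g')%N.
  by apply: Hmin; apply/hasP; exists g' => //; rewrite (infix_trans Hinf Hi) eqxx.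
have Hle2 := size_infix Hinf.
by apply/eqP; apply: infix_size_eq Hinf _; apply/eqP; rewrite eqn_leq Hle2 Hk Hle.
Qed.

Lemma B0_basis : min_hom_basis_ideal I B0.
Proof.
split.
- move=> b [g _ ->]; exists (size g) => w; rewrite /mono; case: (boolP (w == g)) => [/eqP -> //|_]; by rewrite eqxx.
- move=> f; change (ideal_gen B0 f) with (monideal G0 f); rewrite !monidealP.
  by split => -[H1 H2]; split => // w Hw; [rewrite -red_G0 | rewrite red_G0]; exact: H2.
- move=> b [g Hg ->] H.
  have Hg' := Hg; rewrite mem_filter in Hg'; case/andP: Hg' => Hmg HgG.
  have Hm : I (mono K g) by apply: ig_gen; exists g.
  have := H _ Hm.
  have Hsub : forall y, B0 y /\ y <> mono K g ->
      ideal_gen (fun f => exists2 g', g' \in [seq g'' <- G0 | g'' != g] & f = mono K g') y.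
    move=> y [[g' Hg'0 ->] Hne]; apply: ig_gen; exists g' => //; rewrite mem_filter Hg'0 andbT.
    by apply/eqP => E; apply: Hne; rewrite E.
  move/(@ideal_gen_mono _ _ _ Hsub).
  move=> /monidealP [_ Hr]; move: (Hr g); rewrite /mono eqxx oner_eq0 => /(_ isT) /hasP [g' Hg'1 Hinf].
  move: Hg'1; rewrite mem_filter => /andP [Hne Hg'0].
  move: Hg'0; rewrite mem_filter => /andP [_ Hg'G].
  by move/allP: Hmg => /(_ g' Hg'G); rewrite Hinf /= (negPf Hne).
Qed.

Lemma minG_bound d : bk_vanish_ideal I d -> forall g, g \in G -> minGb g -> (size g <= d)%N.
Proof.
move=> Hd g Hg Hm; apply: (Hd B0 B0_basis (mono K g)).
- by exists g => //; rewrite mem_filter Hm Hg.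
- move/(congr1 (fun f => f g)); rewrite /mono /ser0 eqxx => /eqP; by rewrite oner_eq0.
- by move=> w; rewrite /mono; case: (boolP (w == g)) => [/eqP -> //|_]; rewrite eqxx.
Qed.

Lemma T2_deg m dg (T : seq ('I_m * wd)) (D : int) d : reduced T ->
  (forall l, dgT dg T l <= D) -> bk_vanish_ideal I d ->
  forall p, dgT (dgT dg T) (T2 T) p <= D + (d%:Z - 1).
Proof.
move=> HT HD Hd p; have Hp := mem_tnth p (in_tuple (T2 T)).
rewrite /dgT; move: Hp; case: (tnth (in_tuple (T2 T)) p) => l v /=.
rewrite T2_mem // => Hs.
have [g [Hg Hm Hlt _]] := @Sdec_obs _ _ _ _ HT Hs.
have Hgd := @minG_bound _ Hd _ Hg Hm.
have := HD l; rewrite /dgT => H.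
lia.
Qed.

Lemma reduce_list m (T1 : seq ('I_m * wd)) : exists T0,
  [/\ reduced T0, {subset T0 <= T1} &
      forall p, p \in T1 -> red G p.2 \/ exists w, (p.1, w) \in T0 /\ prefix w p.2].
Proof.
pose T0 := undup [seq p <- T1 | ~~ red G p.2 &&
   ~~ has (fun q => (q.1 == p.1) && (q.2 != p.2) && prefix q.2 p.2) T1].
exists T0; split.
- split; first exact: undup_uniq.
    by move=> p; rewrite mem_undup mem_filter => /andP [/andP []].
  move=> [j w] [j' w'] /=; rewrite !mem_undup !mem_filter.
  move=> /andP [_ Hp] /andP [/andP [_ Hn] _] Hj Hpre; subst j'.
  case: (boolP (w == w')) => [/eqP -> //|Hne].
  by move/hasP: Hn; case; exists (j, w) => //=; rewrite eqxx Hne Hpre.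
- by move=> p; rewrite mem_undup mem_filter => /andP [].
suff H : forall N p, (size p.2 < N)%N -> p \in T1 ->
    red G p.2 \/ exists w, (p.1, w) \in T0 /\ prefix w p.2.
  by move=> p; apply: (H (size p.2).+1).
elim=> [//|N IH] p Hs Hp.
case: (boolP (red G p.2)) => Hr; first by left.
case: (boolP (has (fun q => (q.1 == p.1) && (q.2 != p.2) && prefix q.2 p.2) T1)).
  move=> /hasP [q Hq /andP [/andP [/eqP Hq1 Hne] Hpre]].
  have Hlt := @prefix_neq_lt _ _ _ Hpre Hne.
  case: (IH q _ Hq) => [|Hr'|[w [Hw Hpw]]].
  - exact: leq_trans Hlt Hs.
  - by case/negP: Hr; exact: (@red_infix G _ _ (prefixW Hpre) Hr').
  - by right; exists w; rewrite -Hq1; split => //; exact: prefix_trans Hpw Hpre.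
move=> Hn; right; exists p.2; split; last exact: prefix_refl.
by rewrite -surjective_pairing mem_undup mem_filter Hr Hn Hp.
Qed.

Lemma init_T0 m (M : vec K n m -> Prop) : is_monomial I M -> fin_gen I M ->
  exists T0 : seq ('I_m * wd), reduced T0 /\ forall x, M x <-> img I (famT T0) x.
Proof.
move=> [S HS] [k [g Hg]].
pose Sgen := fun y : vec K n m => exists j w, S j w /\ y = vmono K j w.
have Hgi : forall i, rspan I Sgen (g i) by move=> i; apply/HS; apply/Hg; apply: rs_gen; exists i.
have Hsupp i := @rspan_supp m Sgen S (g i) (fun y H => H) (Hgi i).
have [s Hs] : exists s : seq ('I_m * wd), forall i p, g i p.1 p.2 != 0 -> p \in s.
  apply: fin_union => i; have [Hf _] := Hsupp i.
  have [t Ht] : exists t : seq ('I_m * wd), forall j p, (p.1 = j /\ g i j p.2 != 0) -> p \in t.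
    apply: fin_union => j; have [t Ht] := Hf j; exists [seq (j, u) | u <- t].
    by move=> -[j' u] /= [-> H]; apply: map_f; exact: Ht.
  by exists t => p H; exact: (Ht p.1 p (conj erefl H)).
pose s' := [seq p <- s | [exists i, g i p.1 p.2 != 0]].
have Hs' : forall p, p \in s' -> red G p.2 \/ exists w, S p.1 w /\ prefix w p.2.
  move=> p; rewrite mem_filter => /andP [/existsP [i Hi] _]; have [_ Hc] := Hsupp i; exact: Hc.
have [T1 [HT1S HT1c]] : exists T1 : seq ('I_m * wd), (forall q, q \in T1 -> S q.1 q.2) /\
    forall p, p \in s' -> red G p.2 \/ exists w, (p.1, w) \in T1 /\ prefix w p.2.
  elim: s' Hs' => [|p s'' IH] Hs''.
    by exists [::]; split => q; rewrite in_nil.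
  have [T1 [H1 H2]] := IH (fun q Hq => Hs'' q (introT orP (or_intror Hq))).
  case: (Hs'' p (mem_head _ _)) => [Hr|[w [HSw Hpw]]].
    exists T1; split => // q; rewrite inE => /orP [/eqP ->|]; [by left| exact: H2].
  exists ((p.1, w) :: T1); split.
    by move=> q; rewrite inE => /orP [/eqP -> //|]; exact: H1.
  move=> q; rewrite inE => /orP [/eqP ->|/H2 [|[w' [Hw' Hp']]]].
  - by right; exists w; rewrite mem_head.
  - by left.
  - by right; exists w'; rewrite inE Hw' orbT.
have [T0 [HT0 Hsub Hcov]] := @reduce_list _ T1.
exists T0; split => // x; split.
  move/Hg; apply: rspan_mono => y [i ->]; apply: img_famT_cover; first by have [Hf _] := Hsupp i.
  move=> j u Hu.
  have Hp : (j, u) \in s' by rewrite mem_filter (Hs i (j, u) Hu) andbT; apply/existsP; exists i.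
  case: (HT1c _ Hp) => [|[w [Hw Hpw]]] /=; first by left.
  case: (Hcov _ Hw) => /= [Hr|[w0 [Hw0 Hp0]]].
    by left; exact: (@red_infix G _ _ (prefixW Hpw) Hr).
  by right; exists w0; split => //; exact: prefix_trans Hp0 Hpw.
move=> Hx; apply/HS; apply: rspan_mono Hx => y /famT_ex [j [w [Hjw ->]]].
by apply: rs_gen; exists j, w; split => //; exact: (HT1S _ (Hsub _ Hjw)).
Qed.


Record level := Level { lm : nat; ldg : 'I_lm -> int; lT : seq ('I_lm * wd) }.
Definition next (L : level) : level := @Level (size (lT L)) (dgT (ldg L) (lT L)) (T2 (lT L)).
Fixpoint iterL (L0 : level) (i : nat) : level :=
  if i is i'.+1 then next (iterL L0 i') else L0.

Lemma fmb_ext m dg (X Y : vec K n m -> Prop) k (fam : 'I_k -> vec K n m) dgk :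
  (forall x, X x <-> Y x) -> fam_min_basis I dg X fam dgk -> fam_min_basis I dg Y fam dgk.
Proof.
move=> HXY [H1 H2 H3]; split => //.
  by move=> x; rewrite -HXY.
move=> i H; apply: (H3 i) => x /HXY; exact: H.
Qed.

Lemma main_aux (r : nat) (delta : 'I_r -> int) (M : vec K n r -> Prop) :
  is_monomial I M -> fin_gen I M ->
  exists (rk : nat -> nat) (dg : forall i, 'I_(rk i) -> int)
         (phi0 : 'I_(rk 0%N) -> vec K n r)
         (phi : forall i, 'I_(rk i.+1) -> vec K n (rk i)),
    [/\ min_graded_res I delta M dg phi0 phi,
        is_monomial I M /\ fin_gen I M,
        forall i, is_monomial I (img I (phi i)) /\ fin_gen I (img I (phi i)) &
        forall (d : nat) (Delta : int),
          bk_vanish_ideal I d ->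
          bk_vanish I delta M Delta ->
          bk_vanish I delta M Delta /\
          forall i, bk_vanish I (dg i) (img I (phi i)) (Delta + (i.+1)%:Z * (d%:Z - 1))].
Proof.
move=> Hm Hf.
have [T0 [HT0 HM]] := @init_T0 _ _ Hm Hf.
pose L0 := @Level r delta T0.
have Hred : forall i, reduced (lT (iterL L0 i)).
  by elim => //= i IH; apply: T2_reduced.
exists (fun i => lm (iterL L0 i.+1)), (fun i => ldg (iterL L0 i.+1)), (famT T0),
       (fun i => famT (lT (iterL L0 i.+1))).
split.
- split.
  + apply: (@fmb_ext r delta (img I (famT T0))); first by move=> x; rewrite HM.
    exact: famT_min.
  + move=> x; exact: ker_T2.
  + move=> i; exact: famT_min (Hred i.+1).
  + move=> i x; exact: ker_T2 (Hred i.+1).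
- by split.
- move=> i; split; last by exists (size (lT (iterL L0 i.+1))), (famT (lT (iterL L0 i.+1))).
  exists (fun j w => (j, w) \in lT (iterL L0 i.+1)) => x; rewrite /img; split.
    apply: rspan_mono => y /famT_ex [j [w [H ->]]]; apply: rs_gen; by exists j, w.
  apply: rspan_mono => y [j [w [H ->]]]; apply: rs_gen; apply/famT_ex; by exists j, w.
move=> d Delta Hd HMD; split => //.
have Hdeg : forall i l, ldg (iterL L0 i.+1) l <= Delta + (i%:Z) * (d%:Z - 1).
  elim => [|i IH] l.
    rewrite mul0r addr0 /=.
    have [H1 H2 H3] := @famT_min _ delta _ HT0.
    apply: (HMD (fun y => exists l, y = famT T0 l) _ (famT T0 l)).
    - split.
      + by move=> b [l' ->]; exists (dgT delta T0 l'); exact: H1.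
      + by move=> x; rewrite HM.
      + move=> b [l' ->] Hall; apply: (H3 l') => x Hx.
        apply: (@rspan_mono _ _ _ _ _ (Hall x (proj2 (HM x) Hx))) => y [[l'' ->] Hne]; apply: rs_gen; exists l''; split => //.
        by apply/eqP => E; apply: Hne; rewrite E.
    - by exists l.
    - move/(congr1 (fun v => v (jT T0 l) (wT T0 l))).
      rewrite /famT /vmono /jT /wT eqxx /mono eqxx /vzero /ser0 => /eqP; by rewrite oner_eq0.
    - exact: H1.
  have := @T2_deg _ (ldg (iterL L0 i)) (lT (iterL L0 i)) _ d (Hred i) IH Hd l.
  move=> H; apply: (le_trans H); have -> : (i.+1)%:Z = i%:Z + 1 by rewrite -addn1 PoszD.
  rewrite mulrDl mul1r !addrA; exact: lexx.
move=> i; apply: bk_famT => l; exact: (Hdeg i.+1 l).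
Qed.

End Work.

Theorem mainTheorem16 (K : fieldType) (n : nat) (G : seq (word n))
    (r : nat) (delta : 'I_r -> int) (M : vec K n r -> Prop) :
  is_monomial (monideal (K:=K) G) M -> fin_gen (monideal (K:=K) G) M ->
  exists (rk : nat -> nat) (dg : forall i, 'I_(rk i) -> int)
         (phi0 : 'I_(rk 0%N) -> vec K n r)
         (phi : forall i, 'I_(rk i.+1) -> vec K n (rk i)),
    [/\ min_graded_res (monideal (K:=K) G) delta M dg phi0 phi,
        is_monomial (monideal (K:=K) G) M /\ fin_gen (monideal (K:=K) G) M,
        forall i, is_monomial (monideal (K:=K) G) (img (monideal (K:=K) G) (phi i)) /\
                  fin_gen (monideal (K:=K) G) (img (monideal (K:=K) G) (phi i)) &
        forall (d : nat) (Delta : int),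
          bk_vanish_ideal (monideal (K:=K) G) d ->
          bk_vanish (monideal (K:=K) G) delta M Delta ->
          bk_vanish (monideal (K:=K) G) delta M Delta /\
          forall i, bk_vanish (monideal (K:=K) G) (dg i) (img (monideal (K:=K) G) (phi i))
                      (Delta + (i.+1)%:Z * (d%:Z - 1))].
Proof. exact: main_aux. Qed.
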